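(* For any $h$ and any $\mu_{h-1}:\mathcal X\to\mathbb R^{\mathsf d}$, the class $$\mathcal W_h(\mu_{h-1})=\Big\{w=\frac{\langle\mu_{h-1},\theta^{\rm up}\rangle}{\langle\mu_{h-1},\theta^{\rm down}\rangle}:\|w\|_\infty\le C^{\mathbf x}_{h-1}C^{\mathbf a}_{h-1},\ \theta^{\rm up},\theta^{\rm down}\in\mathbb R^{\mathsf d}\Big\}$$ has pseudo-dimension $\mathrm{Pdim}(\mathcal W_h(\mu_{h-1}))\le4(\mathsf d+1)\log(8e)$.
   Context: $C^{\mathbf x}_{h-1},C^{\mathbf a}_{h-1}>0$ are constants. Pseudo-dimension of $\mathcal F\subseteq\mathbb R^{\mathcal X}$: the largest $m$ such that some $x_1,\dots,x_m\in\mathcal X$ are pseudo-shattered, i.e. there exist $c_1,\dots,c_m\in\mathbb R$ such that for every $y\in\{-1,+1\}^m$ some $f\in\mathcal F$ has $\mathrm{sgn}(f(x_i)-c_i)=y_i$ for all $i$. *)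

(* Defs.v *)
From mathcomp Require Import all_boot all_order all_algebra.
From mathcomp Require Import all_classical all_reals all_analysis.
Set Implicit Arguments. Unset Strict Implicit. Unset Printing Implicit Defensive.
Import Order.TTheory GRing.Theory Num.Theory.
Local Open Scope ring_scope.
Local Open Scope classical_set_scope.

Definition dotp (R : realType) (d : nat) (u v : 'I_d -> R) : R :=
  \sum_(i < d) u i * v i.

(* The class W_h(mu_{h-1}) : ratios of linear functionals of the feature map mu
   with sup-norm at most Cx * Ca. (Division by 0 follows MathComp: x/0 = 0.) *)
Definition W_class (R : realType) (X : Type) (d : nat) (mu : X -> 'I_d -> R)
  (Cx Ca : R) : set (X -> R) :=
  [set w | exists tup tdown : 'I_d -> R,
      (forall x, w x = dotp (mu x) tup / dotp (mu x) tdown) /\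
      (forall x, `|w x| <= Cx * Ca)].

Definition pseudo_shattered (R : realType) (X : Type) (F : set (X -> R))
  (m : nat) (xs : 'I_m -> X) : Prop :=
  exists c : 'I_m -> R, forall y : 'I_m -> bool, exists f, F f /\
    forall i, Num.sg (f (xs i) - c i) = (if y i then 1 else -1).

Definition pdim_le (R : realType) (X : Type) (F : set (X -> R)) (b : R) : Prop :=
  forall (m : nat) (xs : 'I_m -> X), pseudo_shattered F xs -> (m%:R <= b).

(* Main.v *)
Require Import Defs.
From mathcomp Require Import all_boot all_order all_algebra.
From mathcomp Require Import all_classical all_reals all_analysis.
From mathcomp Require Import ring lra zify.
Import Order.TTheory GRing.Theory Num.Theory.
Local Open Scope ring_scope.
Set Implicit Arguments. Unset Strict Implicit. Unset Printing Implicit Defensive.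
Section Count.
Variable R : realType.

Definition lin n (f : 'rV[R]_n -> R) :=
  forall (a : R) x y, f (a *: x + y) = a * f x + f y.

Lemma lin0 n (f : 'rV[R]_n -> R) : lin f -> f 0 = 0.
Proof.
move=> lf; have h := lf 1 0 0; rewrite scale1r addr0 mul1r in h.
by apply: (addrI (f 0)); rewrite addr0 -h.
Qed.

Lemma linZ n (f : 'rV[R]_n -> R) a x : lin f -> f (a *: x) = a * f x.
Proof. by move=> lf; rewrite -[a *: x]addr0 lf lin0 // addr0. Qed.

Lemma linD n (f : 'rV[R]_n -> R) x y : lin f -> f (x + y) = f x + f y.
Proof. by move=> lf; rewrite -[x]scale1r lf mul1r scale1r. Qed.

Lemma lin_sum n (f : 'rV[R]_n -> R) I (s : seq I) (g : I -> 'rV_n) :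
  lin f -> f (\sum_(i <- s) g i) = \sum_(i <- s) f (g i).
Proof.
move=> lf; elim: s => [|a s IH]; first by rewrite !big_nil lin0.
by rewrite !big_cons linD // IH.
Qed.

Definition sgo (x : R) : bool * bool := (0 < x, x < 0).

Definition pat n k (F : 'I_k -> 'rV[R]_n -> R) (t : 'rV[R]_n)
  : {ffun 'I_k -> bool * bool} := [ffun i => sgo (F i t)].

Definition Pset n k (F : 'I_k -> 'rV[R]_n -> R) :=
  [set p | `[< exists t, pat F t = p >]].

Definition Hset n k (f : 'rV[R]_n -> R) (F : 'I_k -> 'rV[R]_n -> R) :=
  [set p | `[< exists t, f t = 0 /\ pat F t = p >]].

Lemma sgo_conv (t a b : R) : 0 < t < 1 -> sgo a = sgo b ->
  sgo (t * a + (1 - t) * b) = sgo a.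
Proof.
move=> /andP[t0 t1] [] ha hb; rewrite /sgo.
have [a0|a0|a0] := ltgtP 0 a.
- move: ha; rewrite a0 => /esym hb0.
  have hX : 0 < t * a + (1 - t) * b by nra.
  by rewrite hX (lt_gtF hX) ?a0 ?(lt_gtF a0).
- move: hb; rewrite a0 => /esym hb0.
  have hX : t * a + (1 - t) * b < 0 by nra.
  by rewrite hX (lt_gtF hX) ?a0 ?(lt_gtF a0).
- subst a; move: ha hb; rewrite !ltxx => /esym /negbT hb1 /esym /negbT hb2.
  rewrite -!leNgt in hb1 hb2.
  have -> : b = 0 by apply/eqP; rewrite eq_le hb1 hb2.
  by rewrite !mulr0 addr0 ltxx.
Qed.


Lemma convt (x y : R) : 0 < x - y -> - y / (x - y) * x + (1 - - y / (x - y)) * y = 0.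
Proof. move=> h; field; lra. Qed.

Definition rst k (p : {ffun 'I_k.+1 -> bool * bool}) : {ffun 'I_k -> bool * bool} :=
  [ffun i => p (lift ord0 i)].

Lemma rst_inj k (p q : {ffun 'I_k.+1 -> bool * bool}) :
  p ord0 = q ord0 -> rst p = rst q -> p = q.
Proof.
move=> h0 hr; apply/ffunP => i; case: (unliftP ord0 i) => [j ->|->] //.
by move/ffunP: hr => /(_ j); rewrite !ffunE.
Qed.

Lemma inPset n k (F : 'I_k -> 'rV[R]_n -> R) p :
  (p \in Pset F) = `[< exists t, pat F t = p >].
Proof. by rewrite inE. Qed.

Lemma inHset n k f (F : 'I_k -> 'rV[R]_n -> R) p :
  (p \in Hset f F) = `[< exists t, f t = 0 /\ pat F t = p >].
Proof. by rewrite inE. Qed.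

Lemma rst_pat n k (F : 'I_k.+1 -> 'rV[R]_n -> R) t :
  rst (pat F t) = pat (fun i => F (lift ord0 i)) t.
Proof. by apply/ffunP => i; rewrite !ffunE. Qed.

Lemma step n k (F : 'I_k.+1 -> 'rV[R]_n -> R) : (forall i, lin (F i)) ->
  (#|Pset F| <= #|Pset (fun i => F (lift ord0 i))| +
     2 * #|Hset (F ord0) (fun i => F (lift ord0 i))|)%N.
Proof.
move=> lF; set G := fun i => F (lift ord0 i).
set P := Pset F; set Q := Pset G; set H := Hset (F ord0) G.
have inP p : (p \in P) = `[< exists t, pat F t = p >] by rewrite inPset.
have inQ p : (p \in Q) = `[< exists t, pat G t = p >] by rewrite inPset.
have inH p : (p \in H) = `[< exists t, F ord0 t = 0 /\ pat G t = p >] by rewrite inHset.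
clearbody P Q H.
pose Pp := [set p in P | p ord0 == (true, false)].
pose Pm := [set p in P | p ord0 == (false, true)].
pose P0 := [set p in P | p ord0 == (false, false)].
have sub : P \subset (Pp :|: Pm) :|: P0.
  apply/fintype.subsetP => p pP; rewrite !inE pP /=.
  move: (pP); rewrite inP => /asboolP[t <-]; rewrite ffunE /sgo.
  have [h|h|h] := ltgtP (F ord0 t) 0; rewrite ?eqxx ?orbT //.
have injS (S : {set {ffun 'I_k.+1 -> bool * bool}}) s :
    S \subset [set p : {ffun 'I_k.+1 -> bool * bool} | p ord0 == s] -> #|(@rst k) @: S| = #|S|.
  move=> /fintype.subsetP hS; apply: card_in_imset => p q pS qS; apply: rst_inj.
  by have := hS p pS; have := hS q qS; rewrite !inE => /eqP -> /eqP ->.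
have cPp : #|(@rst k) @: Pp| = #|Pp|.
  by apply: (injS _ (true, false)); apply/fintype.subsetP => p; rewrite !inE => /andP[].
have cPm : #|(@rst k) @: Pm| = #|Pm|.
  by apply: (injS _ (false, true)); apply/fintype.subsetP => p; rewrite !inE => /andP[].
have cP0 : #|(@rst k) @: P0| = #|P0|.
  by apply: (injS _ (false, false)); apply/fintype.subsetP => p; rewrite !inE => /andP[].
have sQ : ((@rst k) @: Pp) :|: ((@rst k) @: Pm) \subset Q.
  apply/fintype.subsetP => q; rewrite !inE => /orP[] /imsetP[p];
  rewrite !inE => /andP[pP _] ->; move: pP; rewrite inP => /asboolP[t <-];
  rewrite inQ rst_pat; apply/asboolP; by exists t.
have sH0 : (@rst k) @: P0 \subset H.
  apply/fintype.subsetP => q /imsetP[p]; rewrite !inE => /andP[pP hp] ->.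
  move: pP hp; rewrite inP => /asboolP[t <-]; rewrite ffunE /sgo.
  rewrite xpair_eqE => /andP[/eqP h1 /eqP h2].
  rewrite inH rst_pat; apply/asboolP; exists t; split => //.
  by apply/eqP; rewrite eq_le !leNgt h1 h2.
have sH : ((@rst k) @: Pp) :&: ((@rst k) @: Pm) \subset H.
  apply/fintype.subsetP => q; rewrite !inE => /andP[/imsetP[p1] + -> /imsetP[p2]].
  rewrite !inE => /andP[p1P h1] /andP[p2P h2] e.
  move: p1P p2P h1 h2 e; rewrite !inP => /asboolP[t1 <-] /asboolP[t2 <-].
  rewrite !ffunE /sgo !xpair_eqE => /andP[/eqP f1 _] /andP[_ /eqP f2].
  have {}f1 : 0 < F ord0 t1 by [].
  have {}f2 : F ord0 t2 < 0 by [].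
  rewrite !rst_pat => e.
  have d0 : 0 < F ord0 t1 - F ord0 t2 by lra.
  pose s := - F ord0 t2 / (F ord0 t1 - F ord0 t2).
  have s0 : 0 < s < 1.
    rewrite /s; apply/andP; split.
      by apply: divr_gt0 => //; lra.
    by rewrite ltr_pdivrMr //; lra.
  rewrite inH; apply/asboolP; exists (s *: t1 + (1 - s) *: t2); split.
    rewrite (lF ord0) linZ //.
    by rewrite /s convt.
  apply/ffunP => i; rewrite ffunE /G (lF _) linZ //.
  move/ffunP: e => /(_ i); rewrite !ffunE => e'.
  by rewrite (sgo_conv s0 e').
apply: (leq_trans (subset_leq_card sub)).
apply: (leq_trans (leq_card_setU _ _)).
have hU : (#|Pp :|: Pm| <= #|Q| + #|H|)%N.
  apply: (leq_trans (leq_card_setU _ _)); rewrite -cPp -cPm -cardsUI.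
  by apply: leq_add; apply: subset_leq_card.
have h0 : (#|P0| <= #|H|)%N by rewrite -cP0; apply: subset_leq_card.
rewrite mul2n -addnn addnA; exact: leq_add.
Qed.


Definition iota n (j : 'I_n.+1) (y : 'rV[R]_n) : 'rV[R]_n.+1 :=
  \row_i (if unlift j i is Some i' then y 0 i' else 0).

Lemma iota_lin n (j : 'I_n.+1) a x y :
  iota j (a *: x + y) = a *: iota j x + iota j y.
Proof.
apply/matrixP => r s; rewrite !mxE; case: unlift => [i'|]; rewrite ?mxE //.
by rewrite mulr0 addr0.
Qed.

Definition Emap n (f : 'rV[R]_n.+1 -> R) (j : 'I_n.+1) (y : 'rV[R]_n) :=
  iota j y + (- (f (iota j y) / f (delta_mx 0 j))) *: delta_mx 0 j.

Lemma Emap_lin n (f : 'rV[R]_n.+1 -> R) j a x y : lin f ->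
  Emap f j (a *: x + y) = a *: Emap f j x + Emap f j y.
Proof.
move=> lf; rewrite /Emap iota_lin lf.
apply/matrixP => r s; rewrite !mxE.
set u := f (iota j x); set v := f (iota j y); set c := f (delta_mx 0 j).
set dd := ((r == 0) && (s == j))%:R.
rewrite mulrDr; ring.
Qed.

Lemma Emap_ker n (f : 'rV[R]_n.+1 -> R) j y : lin f -> f (delta_mx 0 j) != 0 ->
  f (Emap f j y) = 0.
Proof.
move=> lf c0; rewrite /Emap linD // linZ //.
by rewrite mulNr divfK // subrr.
Qed.

Lemma Emap_surj n (f : 'rV[R]_n.+1 -> R) j x : lin f -> f (delta_mx 0 j) != 0 ->
  f x = 0 -> exists y, Emap f j y = x.
Proof.
move=> lf c0 fx0; pose y : 'rV[R]_n := \row_i' x 0 (lift j i').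
have ex : x = iota j y + x 0 j *: delta_mx 0 j.
  apply/matrixP => r s; rewrite !mxE; have -> : r = 0 by apply/ord1.
  case: (unliftP j s) => [i' ->|->]; rewrite ?mxE ?eqxx /=.
    by rewrite eq_sym (negbTE (neq_lift _ _)) mulr0 addr0.
  by rewrite mulr1 add0r.
exists y; rewrite /Emap.
have -> : f (iota j y) = - (x 0 j * f (delta_mx 0 j)).
  apply/eqP; rewrite -addr_eq0 -linZ // -linD // -ex fx0 //.
by rewrite mulNr opprK mulfK // -ex.
Qed.

Lemma exists_delta n (f : 'rV[R]_n -> R) x : lin f -> f x != 0 ->
  exists j, f (delta_mx 0 j) != 0.
Proof.
move=> lf fx; apply/not_existsP => /= hall; move/negP: fx; apply.
rewrite [x]matrix_sum_delta lin_sum // big1 // => i _.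
rewrite lin_sum // big1 // => j _; rewrite linZ //.
have -> : i = 0 by apply/ord1.
by have /negP := hall j; rewrite negbK => /eqP ->; rewrite mulr0.
Qed.


Lemma arith (a b c t y z : nat) : (a <= b + 2 * c)%N -> (b * t <= 20 * y * z)%N ->
  (c * t <= y * z)%N -> (a * (10 * t) <= 20 * y * (11 * z))%N.
Proof.
move=> h1 h2 h3.
have h4 : (a * t <= b * t + 2 * (c * t))%N by rewrite mulnA -mulnDl leq_mul2r h1 orbT.
have e1 : (20 * y * z = 20 * (y * z))%N by rewrite mulnA.
have e2 : (20 * y * (11 * z) = 220 * (y * z))%N by ring.
have e3 : (a * (10 * t) = 10 * (a * t))%N by ring.
rewrite e2 e3; rewrite e1 in h2.
move: h2 h3 h4; move: (a * t)%N (b * t)%N (c * t)%N (y * z)%N => A B C X.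
lia.
Qed.

Lemma count_pat k : forall n (F : 'I_k -> 'rV[R]_n -> R), (forall i, lin (F i)) ->
  (#|Pset F| * 10 ^ k <= 20 ^ n * 11 ^ k)%N.
Proof.
elim: k => [|k IH] n F lF.
  rewrite !expn0 !muln1.
  apply: (leq_trans (max_card _)); rewrite card_ffun card_ord expn0.
  by rewrite expn_gt0.
set G := fun i => F (lift ord0 i).
have lG : forall i, lin (G i) by move=> i; apply: lF.
have hst := step lF.
have [[x fx]|hz] := pselect (exists x, F ord0 x != 0); last first.
  have hz' : forall x, F ord0 x = 0.
    by move=> x; apply/eqP; apply/negPn/negP => h; apply: hz; exists x.
  have cPQ : (#|Pset F| <= #|Pset G|)%N.
    rewrite -(@card_in_imset _ _ (@rst k) (Pset F)); last first.
      move=> p q; rewrite !inPset => /asboolP[t <-] /asboolP[t' <-] e.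
      by apply: rst_inj => //; rewrite !ffunE !hz'.
    apply: subset_leq_card; apply/fintype.subsetP => q /imsetP[p].
    rewrite inPset => /asboolP[t <-] ->; rewrite inPset rst_pat.
    by apply/asboolP; exists t.
  have h := IH n G lG.
  rewrite !expnS mulnCA.
  apply: (leq_trans (leq_mul (leqnn 10) (leq_mul cPQ (leqnn _)))).
  rewrite [X in (_ <= X)%N]mulnCA.
  move: h; set A := (#|Pset G| * 10 ^ k)%N; set X := (20 ^ n * 11 ^ k)%N; lia.
have [j cj] := exists_delta (lF ord0) fx.
destruct n as [|n]; first by have := ltn_ord j.
pose E := Emap (F ord0) j.
pose G' := fun i y => G i (E y).
have lG' : forall i, lin (G' i).
  by move=> i a u v; rewrite /G' /E Emap_lin // lG.
have sH : (Hset (F ord0) G \subset Pset G').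
  apply/fintype.subsetP => p; rewrite inHset => /asboolP[t [ft <-]].
  have [y Ey] := Emap_surj (lF ord0) cj ft.
  rewrite inPset; apply/asboolP; exists y; apply/ffunP => i.
  by rewrite !ffunE /G' /E Ey.
have hH := leq_trans (leq_mul (subset_leq_card sH) (leqnn (10 ^ k))) (IH n G' lG').
have hQ := IH n.+1 G lG.
rewrite !expnS.
apply: (arith hst _ hH).
by rewrite -expnS.
Qed.

End Count.

Section Num.
Variable R : realType.

Lemma ln8e : 3 <= ln (8 * expR 1 : R).
Proof.
rewrite lnM ?posrE ?expR_gt0 // expRK.
suff : 2 <= ln (8 : R) by lra.
have e2 : expR (2 : R) <= 8.
  have h1 : expR (1/16 : R) <= 16/15.
    have := expR_ge1Dx (- (1/16) : R); rewrite expRN => h.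
    have hp := expR_gt0 (1/16 : R).
    rewrite -(@lef_pV2 _ (16/15) (expR (1/16))) ?posrE ?invf_div //; lra.
  have -> : (2 : R) = 32%:R * (1/16) by lra.
  rewrite expRM_natl.
  apply: (le_trans (lerXn2r 32 _ _ h1)); rewrite ?nnegrE ?expR_ge0 //; last lra.
rewrite -[X in X <= _](expRK 2) ler_ln ?posrE ?expR_gt0 //.
Qed.


Lemma numb (m d : nat) :
  (2 ^ m * 10 ^ (m + m) <= 20 ^ (d + d) * 11 ^ (m + m))%N -> (m <= 12 * d)%N.
Proof.
move=> h; rewrite leqNgt; apply/negP => hm.
have hR : (200 : R) ^+ m <= 400 ^+ d * 121 ^+ m.
  move: h; rewrite -(ler_nat R) !natrM !natrX !exprD.
  have -> : (200 : R) ^+ m = 2%:R ^+ m * (10%:R ^+ m * 10%:R ^+ m).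
    by rewrite -exprMn -exprMn; congr (_ ^+ _); lra.
  have -> : (400 : R) ^+ d * 121 ^+ m = 20%:R ^+ d * 20%:R ^+ d * (11%:R ^+ m * 11%:R ^+ m).
    by rewrite -!exprMn; congr (_ ^+ _ * _ ^+ _); lra.
  by [].
have [r hr] : exists r, m = (12 * d + r.+1)%N.
  by exists (m - (12 * d).+1)%N; lia.
move: hR; rewrite hr (exprD (200:R)) (exprD (121:R)) (exprM (200:R)) (exprM (121:R)).
have h12 : (400 : R) * 121 ^+ 12 <= 200 ^+ 12 by lra.
have h1 : (400 : R) ^+ d * (121 ^+ 12) ^+ d <= (200 ^+ 12) ^+ d.
  rewrite -exprMn; apply: lerXn2r; [rewrite nnegrE; lra | rewrite nnegrE; lra | exact: h12].
have h2 : (121 : R) ^+ r.+1 < 200 ^+ r.+1.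
  rewrite ltrXn2r ?nnegrE //; lra.
have p1 : (0 : R) < (121 ^+ 12) ^+ d by apply: exprn_gt0; lra.
have p2 : (0 : R) < 400 ^+ d by apply: exprn_gt0; lra.
have p3 : (0 : R) < 121 ^+ r.+1 by apply: exprn_gt0; lra.
have p4 : (0 : R) < (200 ^+ 12) ^+ d by apply: exprn_gt0; lra.
move: h1 h2 p1 p2 p3 p4.
move: ((400:R) ^+ d) ((121:R) ^+ 12 ^+ d) ((200:R) ^+ 12 ^+ d) ((121:R) ^+ r.+1) ((200:R) ^+ r.+1).
move=> A B C D E h1 h2 p1 p2 p3 p4 hh.
have : A * B * D < C * E.
  apply: (le_lt_trans (y := C * D)).
    by apply: ler_wpM2r; lra.
  by rewrite ltr_pM2l.
lra.
Qed.

End Num.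

Lemma decode_ok (R : realType) (a b c0 : R) (yb : bool) :
  Num.sg (a / b - c0) = (if yb then 1 else -1) ->
  yb = (if sgo b == (false, false) then c0 < 0
        else (sgo (a - c0 * b)).1 == (sgo b).1).
Proof.
rewrite /sgo /=; case: (eqVneq b 0) => [->|bn0].
  rewrite invr0 mulr0 sub0r ltxx eqxx.
  case: yb => /eqP h.
    by move: h; rewrite (sgr_cp0 _).1.1 oppr_gt0.
  by move: h; rewrite (sgr_cp0 _).1.2 oppr_lt0 => h; rewrite lt_gtF.
have ea : a - c0 * b = (a / b - c0) * b by rewrite mulrBl divfK.
rewrite ea; move: (a / b - c0) => q.
have := bn0; rewrite neq_lt => /orP[bn|bp].
  rewrite bn (lt_gtF bn) /= (nmulr_lgt0 _ bn).
  case: yb => /eqP h.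
    by move: h; rewrite (sgr_cp0 _).1.1 => h; rewrite lt_gtF.
  by move: h; rewrite (sgr_cp0 _).1.2 => ->.
rewrite bp (lt_gtF bp) /= (pmulr_lgt0 _ bp).
case: yb => /eqP h.
  by move: h; rewrite (sgr_cp0 _).1.1 => ->.
by move: h; rewrite (sgr_cp0 _).1.2 => h; rewrite lt_gtF.
Qed.


Unset Implicit Arguments.

Theorem lemma14 (R : realType) (X : Type) (d : nat) (mu : X -> 'I_d -> R)
  (Cx Ca : R) (hCx : 0 < Cx) (hCa : 0 < Ca) :
  pdim_le (W_class mu Cx Ca) (4 * (d.+1)%:R * ln (8 * expR 1)).
Proof.
move=> m xs [c hc].
pose u (t : 'rV[R]_(d + d)) (a : 'I_d) : R := t 0 (lshift d a).
pose v (t : 'rV[R]_(d + d)) (b : 'I_d) : R := t 0 (rshift d b).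
pose F : 'I_(m + m) -> 'rV[R]_(d + d) -> R := fun j t =>
  match fintype.split j with
  | inl i => dotp (mu (xs i)) (u t) - c i * dotp (mu (xs i)) (v t)
  | inr i => dotp (mu (xs i)) (v t) end.
have dl (w : 'I_d -> R) (g : 'I_d -> 'I_(d + d)) (a : R) (x y : 'rV[R]_(d + d)) :
  dotp w (fun i => (a *: x + y) 0 (g i)) =
    a * dotp w (fun i => x 0 (g i)) + dotp w (fun i => y 0 (g i)).
  rewrite /dotp mulr_sumr -big_split; apply: eq_bigr => i _; by rewrite !mxE mulrDr mulrCA.
have lF : forall j, lin (F j).
  move=> j a x y; rewrite /F; case: (fintype.split j) => i; rewrite /u /v !dl; ring.
pose dec (p : {ffun 'I_(m + m) -> bool * bool}) : {ffun 'I_m -> bool} :=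
  [ffun i => if p (rshift m i) == (false, false) then c i < 0
             else (p (lshift m i)).1 == (p (rshift m i)).1].
have hall : [set: {ffun 'I_m -> bool}] \subset dec @: Pset F.
  apply/fintype.subsetP => y _.
  have [f [[tu [td [hf _]]] hs]] := hc (fun i => y i).
  pose t : 'rV[R]_(d + d) := row_mx (\row_a tu a) (\row_b td b).
  apply/imsetP; exists (pat F t).
    by rewrite inPset; apply/asboolP; exists t.
  apply/ffunP => i; rewrite !ffunE.
  have sl : fintype.split (lshift m i) = inl i := unsplitK (inl _ i).
  have sr : fintype.split (rshift m i) = inr i := unsplitK (inr _ i).
  rewrite /F sl sr.
  have eu : u t = tu by apply: funext => a; rewrite /u /t row_mxEl mxE.
  have ev : v t = td by apply: funext => a; rewrite /v /t row_mxEr mxE.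
  rewrite eu ev; apply: decode_ok; rewrite -hf; exact: hs.
have c1 : (2 ^ m <= #|Pset F|)%N.
  have := leq_trans (subset_leq_card hall) (leq_imset_card dec (Pset F)).
  by rewrite cardsT card_ffun card_bool card_ord.
have c2 := count_pat lF.
have hm : (m <= 12 * d)%N.
  by apply: (@numb R); apply: (leq_trans _ c2); rewrite leq_mul2r c1 orbT.
have hL := ln8e R.
rewrite -(ler_nat R) natrM in hm.
have -> : ((d.+1)%:R : R) = d%:R + 1 by rewrite natr1.
have hd : (0 : R) <= d%:R by [].
have : (0 : R) <= (d%:R + 1) * (ln (8 * expR 1 : R) - 3) by apply: mulr_ge0; lra.
move: hm hL hd; move: (m%:R : R) (d%:R : R) (ln (8 * expR 1 : R)) => M D L.
nra.
Qed.
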